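(* Let $(X,d)$ be a compact doubling metric space with $\operatorname{diam}(X,d)=1/2$ and $(\mathcal S,D_2)$ a hyperbolic filling with parameters $a\ge\lambda\ge6$. Let $\rho:\mathcal S\to(0,\infty)$ satisfy (H1), (H2) and (H3'). Then there is a constant $K_2\ge1$ such that for all distinct $x,y\in X$ there exists $k_0$ (depending on $x,y$) such that for all $k\ge k_0$, if $u,v\in\mathcal S_k$ with $x\in B_u$, $y\in B_v$, then every path $\gamma$ in $(\mathcal S,D_2)$ joining $u$ and $v$ satisfies $\hat\ell_1(\gamma)\ge K_2^{-1}\pi(c(x,y))$.
   Context: Hyperbolic filling: $X_0\subset X_1\subset\cdots$ increasing, $X_n$ maximal $a^{-n}$-separated in $X$ ($X_0=\{x_0\}$); $\mathcal S_n=\{(x,n):x\in X_n\}$, $\mathcal S=\bigcup_n\mathcal S_n$, $\pi_1(x,n)=x$, $\pi_2(x,n)=n$, $v_0=(x_0,0)$, $B_v=B(\pi_1(v),a^{-\pi_2(v)})$. Each $(x,n)$, $n\ge1$, has a fixed parent $(y,n-1)$ with $d(x,y)=\min_{z\in X_{n-1}}d(x,z)$; genealogy $g(v)=(v_0,\dots,v_k=v)$. Graph $(\mathcal S,D_2)$: edges vertex–parent (vertical) and horizontal edges between distinct $(x,n),(y,n)$ with $B(x,\lambda a^{-n})\cap B(y,\lambda a^{-n})\ne\emptyset$. Paths: vertex sequences with consecutive ones adjacent. For $w\in\mathcal S_k$, $\Gamma_k(w)$: horizontal paths $(u_1,\dots,u_n)$ in $\mathcal S_{k+1}$ with $\pi_1(u_1)\in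 B_w$, $\pi_1(u_n)\notin B(\pi_1(w),2a^{-k})$. $\pi(u)=\prod_{w\in g(u)}\rho(w)$; $\rho^*(u)=\min\{\rho(w):\pi_2(w)=\pi_2(u),D_2(u,w)\le1\}$, $\pi^*(u)$ the same with $\pi$; $L_h(\gamma,\rho)=\sum_{j}\rho^*(u_j)\wedge\rho^*(u_{j+1})$ for horizontal $\gamma=(u_1,\dots,u_N)$. For distinct $x,y$: $\tilde n$ largest with $\{x,y\}\subset B(\tilde z,2a^{-\tilde n})$ for some $(\tilde z,\tilde n)\in\mathcal S$, $c(x,y)$ the set of such $(\tilde z,\tilde n)$, $\pi(c(x,y))=\max_{c(x,y)}\pi$. (H1) $0<\eta_-\le\rho\le\eta_+<1$. (H2) $\pi(u)\le K_0\pi(w)$ for horizontally adjacent $u,w$, some $K_0\ge1$. (H3') for all $k\ge0$, $w\in\mathcal S_k$, $\gamma\in\Gamma_k(w)$: $L_h(\gamma,\rho)\ge1$. Edge length: $\hat\ell_1(\{u,w\})=\pi^*(u)\wedge\pi^*(w)$ for a horizontal edge, and $\hat\ell_1(\{u,w\})=K_0\eta_-^{-1}\pi^*(w)$ if $u$ is the parent of $w$; for a path $\gamma=(v_1,\dots,v_N)$, $\hat\ell_1(\gamma)=\sum_{i=1}^{N-1}\hat\ell_1(\{v_i,v_{i+1}\})$. *)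

(* Defs.v *)
From HB Require Import structures.
From mathcomp Require Import all_boot all_order all_algebra.
From mathcomp Require Import all_classical all_reals.

Set Implicit Arguments.
Unset Strict Implicit.
Unset Printing Implicit Defensive.

Import Order.TTheory GRing.Theory Num.Theory.
Local Open Scope ring_scope.
Local Open Scope classical_set_scope.

Definition is_metric (R : realType) (X : Type) (d : X -> X -> R) : Prop :=
  (forall x y, 0 <= d x y) /\ (forall x y, d x y = 0 <-> x = y) /\
  (forall x y, d x y = d y x) /\ (forall x y z, d x z <= d x y + d y z).

(* compactness of a metric space = sequential compactness *)
Definition seq_compact (R : realType) (X : Type) (d : X -> X -> R) : Prop :=
  forall u : nat -> X, exists phi : nat -> nat,
    (forall n, (phi n < phi n.+1)%N) /\
    exists l : X, forall e : R, 0 < e -> exists N : nat,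
      forall n, (N <= n)%N -> d (u (phi n)) l < e.

Definition doubling (R : realType) (X : Type) (d : X -> X -> R) : Prop :=
  exists N : nat, forall (x : X) (r : R), 0 < r ->
    exists c : nat -> X, forall y, d x y < 2 * r ->
      exists i : nat, (i < N)%N /\ d (c i) y < r.

Definition diam (R : realType) (X : Type) (d : X -> X -> R) : R :=
  sup [set r | exists x y, r = d x y].

(* Xs n x : x belongs to X_n ;  par x n : first coordinate of the parent of (x,n), n >= 1 *)
Definition hyp_filling (R : realType) (X : Type) (d : X -> X -> R) (a : R)
  (Xs : nat -> X -> Prop) (x0 : X) (par : X -> nat -> X) : Prop :=
  (forall x, Xs 0%N x <-> x = x0) /\
  (forall n x, Xs n x -> Xs n.+1 x) /\
  (forall n,
     (forall x y, Xs n x -> Xs n y -> x <> y -> a ^- n <= d x y) /\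
     (forall z, ~ Xs n z -> exists x, Xs n x /\ d z x < a ^- n)) /\
  (forall n x, Xs n.+1 x ->
     Xs n (par x n.+1) /\ (forall z, Xs n z -> d x (par x n.+1) <= d x z)).

Definition inS (X : Type) (Xs : nat -> X -> Prop) (v : X * nat) : Prop :=
  Xs v.2 v.1.

Definition inB (R : realType) (X : Type) (d : X -> X -> R) (a : R)
  (x : X) (v : X * nat) : Prop := d v.1 x < a ^- v.2.

Definition horiz (R : realType) (X : Type) (d : X -> X -> R) (a lam : R)
  (Xs : nat -> X -> Prop) (u w : X * nat) : Prop :=
  inS Xs u /\ inS Xs w /\ u.2 = w.2 /\ u.1 <> w.1 /\
  exists z, d u.1 z < lam * a ^- u.2 /\ d w.1 z < lam * a ^- w.2.

Definition is_parent (X : Type) (Xs : nat -> X -> Prop) (par : X -> nat -> X)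
  (u w : X * nat) : Prop :=
  inS Xs u /\ inS Xs w /\ exists n, w.2 = n.+1 /\ u = (par w.1 n.+1, n).

Definition adj (R : realType) (X : Type) (d : X -> X -> R) (a lam : R)
  (Xs : nat -> X -> Prop) (par : X -> nat -> X) (u w : X * nat) : Prop :=
  horiz d a lam Xs u w \/ is_parent Xs par u w \/ is_parent Xs par w u.

Fixpoint chainP (A : Type) (r : A -> A -> Prop) (x : A) (s : seq A) : Prop :=
  match s with
  | [::] => True
  | y :: t => r x y /\ chainP r y t
  end.

Fixpoint sum_pairs (R : realType) (A : Type) (f : A -> A -> R) (s : seq A) : R :=
  match s with
  | x :: ((y :: _) as t) => f x y + sum_pairs f t
  | _ => 0
  end.

Fixpoint piF (R : realType) (X : Type) (rho : X * nat -> R)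
  (par : X -> nat -> X) (x : X) (n : nat) : R :=
  match n with
  | 0%N => rho (x, 0%N)
  | m.+1 => rho (x, m.+1) * piF rho par (par x m.+1) m
  end.

Definition pi_ (R : realType) (X : Type) (rho : X * nat -> R)
  (par : X -> nat -> X) (v : X * nat) : R := piF rho par v.1 v.2.

(* f^*(u) = min { f w : pi_2 w = pi_2 u, D_2(u,w) <= 1 } (finite set; min = inf) *)
Definition star (R : realType) (X : Type) (d : X -> X -> R) (a lam : R)
  (Xs : nat -> X -> Prop) (f : X * nat -> R) (u : X * nat) : R :=
  inf [set f w | w in [set w | w = u \/ horiz d a lam Xs u w]].

Definition L_h (R : realType) (X : Type) (d : X -> X -> R) (a lam : R)
  (Xs : nat -> X -> Prop) (rho : X * nat -> R) (gam : seq (X * nat)) : R :=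
  sum_pairs (fun u w => Num.min (star d a lam Xs rho u) (star d a lam Xs rho w)) gam.

Definition Gamma (R : realType) (X : Type) (d : X -> X -> R) (a lam : R)
  (Xs : nat -> X -> Prop) (k : nat) (w : X * nat) (gam : seq (X * nat)) : Prop :=
  exists u t, gam = u :: t /\ inS Xs u /\ u.2 = k.+1 /\
    chainP (horiz d a lam Xs) u t /\ inB d a u.1 w /\
    ~ (d w.1 (last u t).1 < 2 * a ^- k).

Definition H1 (R : realType) (X : Type) (Xs : nat -> X -> Prop)
  (rho : X * nat -> R) (eta_m eta_p : R) : Prop :=
  0 < eta_m /\ eta_m <= eta_p /\ eta_p < 1 /\
  forall v, inS Xs v -> eta_m <= rho v /\ rho v <= eta_p.

Definition H2 (R : realType) (X : Type) (d : X -> X -> R) (a lam : R)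
  (Xs : nat -> X -> Prop) (par : X -> nat -> X) (rho : X * nat -> R) (K0 : R) : Prop :=
  1 <= K0 /\ forall u w, horiz d a lam Xs u w -> pi_ rho par u <= K0 * pi_ rho par w.

Definition H3' (R : realType) (X : Type) (d : X -> X -> R) (a lam : R)
  (Xs : nat -> X -> Prop) (rho : X * nat -> R) : Prop :=
  forall (k : nat) (w : X * nat) (gam : seq (X * nat)),
    inS Xs w -> w.2 = k -> Gamma d a lam Xs k w gam -> 1 <= L_h d a lam Xs rho gam.

Definition edge_len (R : realType) (X : Type) (d : X -> X -> R) (a lam : R)
  (Xs : nat -> X -> Prop) (par : X -> nat -> X) (rho : X * nat -> R)
  (K0 eta_m : R) (u w : X * nat) : R :=
  let ps := star d a lam Xs (pi_ rho par) in
  if `[< horiz d a lam Xs u w >] then Num.min (ps u) (ps w)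
  else if `[< is_parent Xs par u w >] then K0 / eta_m * ps w
  else if `[< is_parent Xs par w u >] then K0 / eta_m * ps u
  else 0.

Definition ell_hat (R : realType) (X : Type) (d : X -> X -> R) (a lam : R)
  (Xs : nat -> X -> Prop) (par : X -> nat -> X) (rho : X * nat -> R)
  (K0 eta_m : R) (gam : seq (X * nat)) : R :=
  sum_pairs (edge_len d a lam Xs par rho K0 eta_m) gam.

Definition cset (R : realType) (X : Type) (d : X -> X -> R) (a : R)
  (Xs : nat -> X -> Prop) (x y : X) (v : X * nat) : Prop :=
  inS Xs v /\ d v.1 x < 2 * a ^- v.2 /\ d v.1 y < 2 * a ^- v.2 /\
  forall w, inS Xs w -> d w.1 x < 2 * a ^- w.2 -> d w.1 y < 2 * a ^- w.2 ->
    (w.2 <= v.2)%N.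

(* pi(c(x,y)) = max over c(x,y) of pi (finite set; max = sup) *)
Definition pi_c (R : realType) (X : Type) (d : X -> X -> R) (a : R)
  (Xs : nat -> X -> Prop) (par : X -> nat -> X) (rho : X * nat -> R) (x y : X) : R :=
  sup [set pi_ rho par v | v in cset d a Xs x y].

(* Main.v *)
Require Import Defs.
From HB Require Import structures.
From mathcomp Require Import all_boot all_order all_algebra.
From mathcomp Require Import all_classical all_reals.
From mathcomp Require Import ring lra zify.
Import Order.TTheory GRing.Theory Num.Theory.
Local Open Scope ring_scope.
Set Implicit Arguments.
Unset Strict Implicit.
Unset Printing Implicit Defensive.

Fixpoint allv {A : Type} (P : A -> Prop) (s : seq A) : Prop :=
  match s with [::] => True | x :: t => P x /\ allv P t end.

Lemma allv_cat (A : Type) (P : A -> Prop) s1 s2 :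
  allv P (s1 ++ s2) <-> allv P s1 /\ allv P s2.
Proof. elim: s1 => [|x s1 IH] /=; first by tauto. rewrite IH; tauto. Qed.

Lemma allv_impl (A : Type) (P Q : A -> Prop) s :
  (forall x, P x -> Q x) -> allv P s -> allv Q s.
Proof. move=> H; elim: s => [|x s IH] //= [/H ? /IH ?]; by split. Qed.

Lemma allv_last (A : Type) (P : A -> Prop) x s : allv P (x :: s) -> P (last x s).
Proof. elim: s x => [|y s IH] x /=; first by case. by case=> _; apply: IH. Qed.

Lemma chainP_cat (A : Type) (r : A -> A -> Prop) x s1 s2 :
  chainP r x (s1 ++ s2) <-> chainP r x s1 /\ chainP r (last x s1) s2.
Proof. elim: s1 x => [|y s1 IH] x /=; first by tauto. rewrite IH; tauto. Qed.

Lemma sum_pairs_cons2 (R : realType) (A : Type) (f : A -> A -> R) x y s :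
  sum_pairs f (x :: y :: s) = f x y + sum_pairs f (y :: s).
Proof. by []. Qed.

Lemma sum_pairs_cat (R : realType) (A : Type) (f : A -> A -> R) x s1 s2 :
  sum_pairs f (x :: s1 ++ s2) = sum_pairs f (x :: s1) + sum_pairs f (last x s1 :: s2).
Proof.
elim: s1 x => [|y s1 IH] x; first by rewrite /= add0r.
by rewrite cat_cons !sum_pairs_cons2 IH addrA.
Qed.

Lemma split_first (A : Type) (P : A -> Prop) (s : seq A) :
  allv (fun v => ~ P v) s \/
  exists s1 b s2, s = s1 ++ b :: s2 /\ allv (fun v => ~ P v) s1 /\ P b.
Proof.
elim: s => [|x s IH]; first by left.
case: (pselect (P x)) => Px.
  by right; exists [::], x, s.
case: IH => [H|[s1 [b [s2 [-> [H1 H2]]]]]]; first by left.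
by right; exists (x :: s1), b, s2.
Qed.

Lemma belast_cat_cons (A : Type) (x : A) s1 b s2 :
  belast x (s1 ++ b :: s2) = belast x s1 ++ (last x s1 :: belast b s2).
Proof. by rewrite belast_cat. Qed.

Lemma nat0 (m x : nat) : (m < x)%N -> (x <= m + 0)%N -> False.
Proof. lia. Qed.
Lemma nat1 (m x : nat) : (m < x)%N -> x <> m.+1 -> (m.+2 <= x)%N.
Proof. lia. Qed.
Lemma nat2 (n a b : nat) : (a + b.+1 <= n.+1)%N -> (b <= n)%N.
Proof. lia. Qed.
Lemma nat3 (m D v : nat) : (m < v)%N -> (v <= m + D.+1)%N -> v <> m.+1 ->
  (m.+1 < v)%N /\ (v <= m.+1 + D)%N.
Proof. lia. Qed.

Section Proof.
Variables (R : realType) (X : Type) (d : X -> X -> R) (a lam : R)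
  (Xs : nat -> X -> Prop) (x0 : X) (par : X -> nat -> X)
  (rho : X * nat -> R) (eta_m eta_p K0 : R).
Hypothesis dm : is_metric d.
Hypothesis lam6 : 6 <= lam.
Hypothesis lama : lam <= a.
Hypothesis hf : hyp_filling d a Xs x0 par.
Hypothesis rhop : forall v, inS Xs v -> 0 < rho v.
Hypothesis h1 : H1 Xs rho eta_m eta_p.
Hypothesis h2 : H2 d a lam Xs par rho K0.
Hypothesis h3 : H3' d a lam Xs rho.

Local Notation e n := (a ^- n).
Local Notation S := (inS Xs).
Local Notation hz := (horiz d a lam Xs).
Local Notation adjr := (adj d a lam Xs par).
Local Notation pi := (pi_ rho par).
Local Notation rs := (star d a lam Xs rho).
Local Notation ps := (star d a lam Xs pi).
Local Notation el := (edge_len d a lam Xs par rho K0 eta_m).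
Local Notation ell := (ell_hat d a lam Xs par rho K0 eta_m).

Lemma d0 x : d x x = 0. Proof. by case: dm => _ [H _]; apply/H. Qed.
Lemma dsym x y : d x y = d y x. Proof. by case: dm => _ [_ [H _]]. Qed.
Lemma dtri x y z : d x z <= d x y + d y z. Proof. by case: dm => _ [_ [_ H]]. Qed.
Lemma dge0 x y : 0 <= d x y. Proof. by case: dm. Qed.

Lemma a6 : 6 <= a. Proof. exact: le_trans lam6 lama. Qed.
Lemma a_pos : 0 < a. Proof. have := a6; lra. Qed.
Lemma e_pos n : 0 < e n. Proof. by rewrite invr_gt0 exprn_gt0 // a_pos. Qed.
Lemma eS n : e n.+1 * a = e n.
Proof.
have ha : a != 0 by rewrite gt_eqF // a_pos.
by rewrite exprSr invfM -mulrA mulVf // mulr1.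
Qed.
Lemma e6 n : 6 * e n.+1 <= e n.
Proof. rewrite -(eS n); have := e_pos n.+1; have := a6; nra. Qed.
Lemma elam n : lam * e n.+1 <= e n.
Proof. rewrite -(eS n); have := e_pos n.+1; have := lama; nra. Qed.
Lemma e_mono m n : (m <= n)%N -> e n <= e m.
Proof.
move=> /subnK <-; elim: (n - m)%N => [|k IH]; first by rewrite add0n.
rewrite addSn; apply: le_trans IH; have := e6 (k + m)%N; have := e_pos (k + m).+1; lra.
Qed.
Lemma e_lt m n : e n < e m -> (m < n)%N.
Proof. by move=> H; rewrite ltnNge; apply/negP => /e_mono; rewrite leNgt H. Qed.

Lemma eta_pos : 0 < eta_m. Proof. by case: h1. Qed.
Lemma K0_ge1 : 1 <= K0. Proof. by case: h2. Qed.
Lemma rho_ge v : S v -> eta_m <= rho v. Proof. by case: h1 => _ [_ [_ H]] /H []. Qed.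

Lemma Xs_S n x : Xs n x -> Xs n.+1 x. Proof. by case: hf => _ [H _]; apply: H. Qed.
Lemma F1in n x : Xs n.+1 x -> Xs n (par x n.+1).
Proof. by case: hf => _ [_ [_ H]] /H []. Qed.
Lemma F3 n p : exists q, Xs n q /\ d q p < e n.
Proof.
case: (pselect (Xs n p)) => H; first by exists p; rewrite d0 e_pos.
case: hf => _ [_ [/(_ n) [_ /(_ p H)] [q [Hq Hd]] _]].
by exists q; rewrite dsym.
Qed.
Lemma F1 n x : Xs n.+1 x -> d x (par x n.+1) < e n.
Proof.
move=> Hx; case: hf => _ [_ [_ /(_ _ _ Hx) [_ Hmin]]].
case: (F3 n x) => q [Hq Hd]; apply: le_lt_trans (Hmin _ Hq) _; by rewrite dsym.
Qed.

Lemma hz_lev u w : hz u w -> [/\ S u, S w & u.2 = w.2]. Proof. by case=> [? [? [? _]]]. Qed.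
Lemma hz_dist u w : hz u w -> d u.1 w.1 < 2 * lam * e u.2.
Proof.
case=> _ [_ [Hl [_ [z [H1 H2]]]]]; rewrite -Hl in H2.
have := dtri u.1 z w.1; rewrite (dsym z w.1); lra.
Qed.
Lemma hz_sym u w : hz u w -> hz w u.
Proof.
case=> Hu [Hw [Hl [Hn [z [H1 H2]]]]]; split=> //; split=> //; split=> //; split.
  by move=> E; apply: Hn.
by exists z; rewrite -Hl; split=> //; rewrite Hl.
Qed.
Lemma close u w : S u -> S w -> u.2 = w.2 -> d u.1 w.1 < lam * e u.2 -> u = w \/ hz u w.
Proof.
move=> Hu Hw Hl Hd; case: (pselect (u.1 = w.1)) => E.
  by left; case: u w Hl E {Hu Hw Hd} => [? ?] [? ?] /= -> ->.
right; split=> //; split=> //; split=> //; split=> //; exists w.1; split=> //.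
by rewrite d0 -Hl; apply: mulr_gt0 (e_pos _); have := lam6; lra.
Qed.

Lemma pi_S x n : pi (x, n.+1) = rho (x, n.+1) * pi (par x n.+1, n). Proof. by []. Qed.
Lemma pi_pos v : S v -> 0 < pi v.
Proof.
case: v => x n; elim: n x => [|n IH] x Hx; first exact: rhop.
by rewrite pi_S mulr_gt0 ?rhop // IH //; apply: F1in.
Qed.

Lemma star_le (f : X * nat -> R) u w :
  (forall w', w' = u \/ hz u w' -> 0 <= f w') -> (w = u \/ hz u w) ->
  star d a lam Xs f u <= f w.
Proof.
move=> Hf Hw; rewrite /star; apply: ge_inf; last by exists w.
by exists 0 => y [w' Hw' <-]; apply: Hf.
Qed.
Lemma star_ge (f : X * nat -> R) u b :
  (forall w', w' = u \/ hz u w' -> b <= f w') -> b <= star d a lam Xs f u.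
Proof.
move=> Hf; rewrite /star; apply: lb_le_inf.
  by exists (f u); exists u => //; left.
by move=> y [w' Hw' <-]; apply: Hf.
Qed.
Lemma memb_S u w : S u -> w = u \/ hz u w -> S w.
Proof. by move=> Hu [->|/hz_lev[]]. Qed.
Lemma rs_le u w : S u -> w = u \/ hz u w -> rs u <= rho w.
Proof.
move=> Hu Hw; apply: star_le => // w' Hw'; apply/ltW/rhop; exact: memb_S Hw'.
Qed.
Lemma rs_ge0 u : S u -> 0 <= rs u.
Proof. by move=> Hu; apply: star_ge => w' Hw'; apply/ltW/rhop; exact: memb_S Hw'. Qed.
Lemma ps_ge0 u : S u -> 0 <= ps u.
Proof. by move=> Hu; apply: star_ge => w' Hw'; apply/ltW/pi_pos; exact: memb_S Hw'. Qed.

Lemma adj_S u w : adjr u w -> S u /\ S w.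
Proof. by case=> [/hz_lev[]|[[? [? _]]|[? [? _]]]]. Qed.

Lemma el_ge0 u w : adjr u w -> 0 <= el u w.
Proof.
move=> /adj_S [Hu Hw]; rewrite /edge_len /=.
case: asboolP => _; first by rewrite le_min !ps_ge0.
have hK : 0 <= K0 / eta_m by rewrite divr_ge0 // ?ltW ?eta_pos //; have := K0_ge1; lra.
case: asboolP => _; first by rewrite mulr_ge0 // ps_ge0.
by case: asboolP => _ //; rewrite mulr_ge0 // ps_ge0.
Qed.

Lemma ell_cons2 x y s : ell (x :: y :: s) = el x y + ell (y :: s). Proof. by []. Qed.
Lemma ell_ge0 s sg : chainP adjr s sg -> 0 <= ell (s :: sg).
Proof.
elim: sg s => [|y sg IH] s /=; first by rewrite /ell_hat /= lexx.
by case=> H1 H2; rewrite ell_cons2 addr_ge0 // ?el_ge0 // IH.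
Qed.
Lemma ell_cat s s1 s2 : ell (s :: s1 ++ s2) = ell (s :: s1) + ell (last s s1 :: s2).
Proof. exact: sum_pairs_cat. Qed.

Fixpoint ancx (x : X) (L t : nat) : X :=
  match t with 0 => x | t'.+1 => ancx (par x L) L.-1 t' end.
Definition anc (j : nat) (v : X * nat) : X * nat := (ancx v.1 v.2 (v.2 - j), j).

Lemma ancx_in t L x : Xs L x -> (t <= L)%N -> Xs (L - t) (ancx x L t).
Proof.
elim: t L x => [|t IH] L x Hx Ht /=; first by rewrite subn0.
case: L Hx Ht => [|L] Hx Ht //=.
by rewrite subSS; apply: IH => //; apply: F1in.
Qed.
Lemma ancx_dist t L x : Xs L x -> (t <= L)%N ->
  d x (ancx x L t) <= 6/5 * (e (L - t) - e L).
Proof.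
elim: t L x => [|t IH] L x Hx Ht /=; first by rewrite subn0 d0 subrr mulr0.
case: L Hx Ht => [|L] Hx Ht //=.
rewrite subSS; have H1 := F1 Hx; have := IH _ _ (F1in Hx) Ht.
have := dtri x (par x L.+1) (ancx (par x L.+1) L t); have := e6 L; lra.
Qed.
Lemma ancx_par t L x : (t < L)%N -> ancx x L t.+1 = par (ancx x L t) (L - t).
Proof.
elim: t L x => [|t IH] L x Ht; first by rewrite /= subn0.
case: L Ht => [|L] Ht //.
change (ancx (par x L.+1) L t.+1 = par (ancx (par x L.+1) L t) (L.+1 - t.+1)).
by rewrite IH // subSS.
Qed.
Lemma anc_in j v : S v -> (j <= v.2)%N -> S (anc j v).
Proof.
move=> Hv Hj; rewrite /anc /inS /=.
have := ancx_in Hv (leq_subr j v.2); by rewrite subKn.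
Qed.
Lemma anc_dist j v : S v -> (j <= v.2)%N -> d v.1 (anc j v).1 <= 6/5 * e j.
Proof.
move=> Hv Hj; have := ancx_dist Hv (leq_subr j v.2); rewrite subKn //.
have := e_pos v.2; lra.
Qed.
Lemma anc_self v : anc v.2 v = v.
Proof. by case: v => x n; rewrite /anc /= subnn. Qed.
Lemma anc_parS j v : (j.+1 <= v.2)%N -> anc j v = (par (anc j.+1 v).1 j.+1, j).
Proof.
move=> Hj; rewrite /anc /=; have -> : (v.2 - j = (v.2 - j.+1).+1)%N by lia.
rewrite ancx_par; last by lia.
by have -> : (v.2 - (v.2 - j.+1) = j.+1)%N by lia.
Qed.

Definition HP m (w : X * nat) P := forall w'', S w'' -> w''.2 = m -> d w.1 w''.1 < 6 * e m -> P <= pi w''.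

Lemma pi_lower x n r P : 0 <= r -> r <= rho (x, n.+1) -> 0 <= P -> P <= pi (par x n.+1, n) ->
  r * P <= pi (x, n.+1).
Proof. by move=> *; rewrite pi_S ler_pM. Qed.

Lemma le_mul_min (c x y z : R) : z <= c * x -> z <= c * y -> z <= c * Num.min x y.
Proof. by rewrite /Order.min; case: ifP. Qed.

Lemma pmin_le (P x y : R) : 0 <= P -> P * Num.min x y <= P * x.
Proof. by move=> HP; rewrite ler_wpM2l // ge_min lexx. Qed.
Lemma pmin_ler (P x y : R) : 0 <= P -> P * Num.min x y <= P * y.
Proof. by move=> HP; rewrite ler_wpM2l // ge_min lexx orbT. Qed.

Lemma rs_pi m w P q q'' : HP m w P -> 0 <= P -> S q -> q.2 = m.+1 -> (q'' = q \/ hz q q'') ->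
  d w.1 (par q''.1 m.+1) < 6 * e m -> rs q * P <= pi q''.
Proof.
move=> HPw P0 Sq Lq Hq'' Hd.
have Sq'' : S q'' by apply: memb_S Hq''.
have Lq'' : q''.2 = m.+1 by case: Hq'' => [->|/hz_lev[_ _ <-]].
case: q'' Hq'' Hd Sq'' Lq'' => x n /= Hq'' Hd Sq'' Lq''; subst n.
apply: pi_lower => //; first exact: rs_ge0.
  exact: rs_le Hq''.
by apply: HPw => //; apply: F1in.
Qed.

Lemma K0sq_ge1 : 1 <= K0 ^+ 2.
Proof. have := K0_ge1; rewrite expr2; nra. Qed.

Lemma Pay_h m w P s s' : HP m w P -> 0 <= P -> s.2 = m.+1 -> hz s s' ->
  d w.1 s.1 < 5/2 * e m -> P * Num.min (rs s) (rs s') <= K0 ^+ 2 * el s s'.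
Proof.
move=> HPw P0 Ls Hss' Hws.
have [Ss Ss' Lss'] := hz_lev Hss'.
have hem := e_pos m; have hem1 := e_pos m.+1; have hel := elam m; have he6 := e6 m.
have K1 := K0_ge1; have K2 := K0sq_ge1.
have El : el s s' = Num.min (ps s) (ps s').
  by rewrite /edge_len /=; case: asboolP.
rewrite El; apply: (le_trans (pmin_le _ _ P0)); rewrite mulrC.
have A : rs s * P <= ps s.
  apply: star_ge => w' Hw'; apply: (rs_pi HPw P0 Ss Ls Hw').
  have Sw' := memb_S Ss Hw'.
  have Lw' : w'.2 = m.+1 by case: Hw' => [->|/hz_lev[_ _ <-]].
  have Hpar : d w'.1 (par w'.1 m.+1) < e m by apply: F1; rewrite -Lw'.
  have Hsw : d s.1 w'.1 <= 2 * e m.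
    case: Hw' => [->|/hz_dist]; first by rewrite d0; lra.
    rewrite Ls => H; have := elam m; lra.
  have := dtri w.1 s.1 w'.1; have := dtri w.1 w'.1 (par w'.1 m.+1); lra.
have B : rs s * P <= pi s.
  apply: (rs_pi HPw P0 Ss Ls (or_introl erefl)).
  have Hpar : d s.1 (par s.1 m.+1) < e m by apply: F1; rewrite -Ls.
  have := dtri w.1 s.1 (par s.1 m.+1); lra.
have C : pi s / K0 ^+ 2 <= ps s'.
  apply: star_ge => w' Hw'.
  have Sw' := memb_S Ss' Hw'.
  rewrite ler_pdivrMr; last by lra.
  have H1 : pi s <= K0 * pi s' by case: h2 => _; apply.
  have H2' : pi s' <= K0 * pi w'.
    case: Hw' => [->|Hh]; last by case: h2 => _; apply.
    have := pi_pos Ss'; nra.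
  have := pi_pos Ss; have := pi_pos Sw'; have := pi_pos Ss'; rewrite expr2; nra.
apply: le_mul_min.
  have := ps_ge0 Ss; nra.
have := ps_ge0 Ss'; have : pi s = K0 ^+ 2 * (pi s / K0 ^+ 2).
  by rewrite mulrC divfK // gt_eqF //; lra.
nra.
Qed.

Lemma adj_up g b : adjr g b -> (b.2 < g.2)%N -> g.2 = b.2.+1 /\ b = (par g.1 g.2, b.2).
Proof.
case=> [/hz_lev[_ _ ->]|[[_ [_ [n [E1 E2]]]]|[_ [_ [n [E1 E2]]]]]].
- by rewrite ltnn.
- by rewrite E1 E2 /= ltnNge leqnSn.
- by rewrite E1 E2 /=.
Qed.

Lemma Pay_v g j : S g -> g.2 = j.+1 -> pi (par g.1 j.+1, j) <= el g (par g.1 j.+1, j).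
Proof.
move=> Sg Lg; set b := (par g.1 j.+1, j).
have Sb : S b by apply: F1in; rewrite -Lg.
have hej := e_pos j; have hej1 := e_pos j.+1; have hel := elam j.
have K1 := K0_ge1; have eta0 := eta_pos.
have El : el g b = K0 / eta_m * ps g.
  rewrite /edge_len /=; case: asboolP => [/hz_lev[_ _ E]|_]; first by move: E; rewrite Lg /=; lia.
  case: asboolP => [[_ [_ [n [E1 E2]]]]|_]; first by move: E1; rewrite /b /= => E1; move: E2 => /(f_equal snd) /=; lia.
  case: asboolP => // H; exfalso; apply: H; split=> //; split=> //; exists j; split=> //.
rewrite El.
have A : eta_m * pi b / K0 <= ps g.
  apply: star_ge => w' Hw'.
  have Sw' := memb_S Sg Hw'.
  have Lw' : w'.2 = j.+1 by case: Hw' => [->|/hz_lev[_ _ <-]].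
  have Sp : S (par w'.1 j.+1, j) by apply: F1in; rewrite -Lw'.
  have Hpw : pi w' = rho w' * pi (par w'.1 j.+1, j).
    by case: w' Hw' Sw' Lw' {Sp} => x n /= _ _ ->.
  have Hcl : pi b <= K0 * pi (par w'.1 j.+1, j).
    have Hd : d b.1 (par w'.1 j.+1) < lam * e j.
      have H1 : d g.1 (par g.1 j.+1) < e j by apply: F1; rewrite -Lg.
      have H2 : d w'.1 (par w'.1 j.+1) < e j by apply: F1; rewrite -Lw'.
      have H3 : d g.1 w'.1 <= 2 * e j.
        case: Hw' => [->|/hz_dist]; first by rewrite d0; lra.
        by rewrite Lg => H; lra.
      have := dtri b.1 g.1 (par w'.1 j.+1); have := dtri g.1 w'.1 (par w'.1 j.+1).
      have H1' : d (par g.1 j.+1) g.1 < e j by rewrite dsym.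
      have H6 : 6 * e j <= lam * e j by rewrite ler_wpM2r // ltW.
      rewrite /b /=; lra.
    case: (close Sb Sp erefl Hd) => [<-|Hh]; last by case: h2 => _; apply.
    have := pi_pos Sb; nra.
  rewrite ler_pdivrMr; last by lra.
  rewrite Hpw; have := rho_ge Sw'; have := pi_pos Sp; have := pi_pos Sb; nra.
have := pi_pos Sb; have : pi b = K0 / eta_m * (eta_m * pi b / K0).
  by field; apply/andP; split; rewrite gt_eqF //; lra.
have : 0 <= K0 / eta_m by rewrite divr_ge0 //; lra.
move=> H0 E _; rewrite {1}E; exact: ler_wpM2l.
Qed.

Lemma step_deep g b m : adjr g b -> (m.+2 <= g.2)%N -> (m.+2 <= b.2)%N -> d g.1 b.1 <= 2 * e m.+1.
Proof.
have hm := e_pos m.+1.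
case=> [Hh|[[_ [Sb [n [E1 E2]]]]|[_ [Sg [n [E1 E2]]]]]] Hg Hb.
- have := hz_dist Hh; case: g Hh Hg {Hb} => x [|l] //= Hh Hg Hd.
  have := elam l; have := e_mono (m:=m.+1) (n:=l) Hg; have := e_pos l.+1; lra.
- rewrite E2 /= dsym; have := F1 (n:=n) (x:=b.1); rewrite -E1 => /(_ Sb) H.
  rewrite E2 /= in Hg; have := e_mono (m:=m.+1) (n:=n) (ltnW Hg); lra.
- rewrite E2 /=; have := F1 (n:=n) (x:=g.1); rewrite -E1 => /(_ Sg) H.
  rewrite E2 /= in Hb; have := e_mono (m:=m.+1) (n:=n) (ltnW Hb); lra.
Qed.

Local Notation Lh := (L_h d a lam Xs rho).
Lemma Lh_cons2 x y Q : Lh (x :: y :: Q) = Num.min (rs x) (rs y) + Lh (y :: Q). Proof. by []. Qed.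

Lemma mul_ge1 (c x : R) : 1 <= c -> 0 <= x -> x <= c * x.
Proof. move=> *; nra. Qed.

Definition lev_ok m D (v : X * nat) := (m < v.2)%N /\ (v.2 <= m + D)%N.

Definition claim D := forall m w P s sg, S w -> w.2 = m -> 0 <= P -> HP m w P -> S s ->
  chainP adjr s sg -> allv (lev_ok m D) (s :: sg) -> d w.1 (anc m.+1 s).1 < e m ->
  allv (fun v => d w.1 v.1 < 5/2 * e m) (belast s sg) -> 5/2 * e m <= d w.1 (last s sg).1 ->
  P <= K0 ^+ 2 * ell (s :: sg).

Lemma allv_and (A : Type) (P Q : A -> Prop) l : allv P l -> allv Q l -> allv (fun v => P v /\ Q v) l.
Proof. by elim: l => //= x l IH [? ?] [? ?]; split => //; apply: IH. Qed.

Lemma near_head (A : Type) (P : A -> Prop) s s1 b s2 : allv P (belast s (s1 ++ b :: s2)) -> P s.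
Proof. by case: s1 => [|y s1] /= []. Qed.

Lemma anc_facts m s : S s -> (m < s.2)%N ->
  [/\ S (anc m.+1 s), (anc m.+1 s).2 = m.+1 & d s.1 (anc m.+1 s).1 <= 6/5 * e m.+1].
Proof. by move=> Ss Hm; split => //; [apply: anc_in | apply: anc_dist]. Qed.

Lemma scan_nil m (w : X * nat) (P : R) (s : X * nat) : S s -> (m < s.2)%N -> 5/2 * e m <= d w.1 s.1 ->
  exists Q, chainP hz (anc m.+1 s) Q /\ 2 * e m <= d w.1 (last (anc m.+1 s) Q).1 /\
    P * Lh (anc m.+1 s :: Q) <= K0 ^+ 2 * ell (s :: [::]).
Proof.
move=> Ss Hm Hf; exists [::]; split => //; split; last by rewrite /L_h /ell_hat /= !mulr0.
have [_ _ Hd] := anc_facts Ss Hm; have := e6 m; have := e_pos m.+1.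
have := dtri w.1 (anc m.+1 s).1 s.1; rewrite (dsym (anc m.+1 s).1); lra.
Qed.

Lemma scan D (IH : claim D) m (w : X * nat) (P : R) : S w -> w.2 = m -> 0 <= P -> HP m w P ->
  forall n s sg, (size sg <= n)%N -> S s -> chainP adjr s sg -> allv (lev_ok m D.+1) (s :: sg) ->
  allv (fun v => d w.1 v.1 < 5/2 * e m) (belast s sg) -> 5/2 * e m <= d w.1 (last s sg).1 ->
  exists Q, chainP hz (anc m.+1 s) Q /\ 2 * e m <= d w.1 (last (anc m.+1 s) Q).1 /\
    P * Lh (anc m.+1 s :: Q) <= K0 ^+ 2 * ell (s :: sg).
Proof.
move=> Sw Lw P0 HPw n; elim: n => [|n IHn] s sg Hsz Ss Hp Hlev Hnear Hfar.
  by case: sg Hsz Hp Hlev Hnear Hfar => // _ _ [[Hm _] _] _ Hf; apply: scan_nil.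
have hem := e_pos m; have he1 := e_pos m.+1; have he6 := e6 m; have he6' := e6 m.+1.
have hel := elam m; have hl6 : 6 * e m.+1 <= lam * e m.+1 by rewrite ler_wpM2r // ltW.
have K2 := K0sq_ge1.
have [[Hm HmD] Hlev'] := Hlev.
have [Sq Lq Dq] := anc_facts Ss Hm.
case: (eqVneq s.2 m.+1) => Hs.
  have Eq : anc m.+1 s = s by rewrite -Hs anc_self.
  rewrite Eq.
  case: sg Hsz Hp Hlev Hlev' Hnear Hfar => [|s' sg'] Hsz Hp Hlev Hlev' Hnear Hfar.
    by have := scan_nil P Ss Hm Hfar; rewrite Eq.
  have [Hss' Hp'] := Hp; have [Ws Hnear'] := Hnear.
  have Ls'ok : lev_ok m D.+1 s' by case: Hlev'.
  have Sz' : (size sg' <= n)%N by [].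
  case: Hss' => [Hh|[[_ [Ss' [k [E1 E2]]]]|[_ [_ [k [E1 E2]]]]]].
  - have [_ Ss' Lss'] := hz_lev Hh.
    have [Q' [HQc [HQf HQl]]] := IHn s' sg' Sz' Ss' Hp' Hlev' Hnear' Hfar.
    have Ls' : s'.2 = m.+1 by rewrite -Lss'.
    have Eq' : anc m.+1 s' = s' by rewrite -Ls' anc_self.
    rewrite Eq' in HQc HQf HQl.
    exists (s' :: Q'); split; first by split.
    split; first by [].
    rewrite Lh_cons2 ell_cons2.
    have := Pay_h HPw P0 Hs Hh Ws; rewrite mulrDr mulrDr; lra.
  - have Ek : k = m.+1 by move: Hs; rewrite E2.
    have Eq' : anc m.+1 s' = s.
      rewrite (@anc_parS m.+1 s'); last by rewrite E1 Ek.
      have -> : anc m.+2 s' = s' by rewrite -Ek -E1 anc_self.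
      by rewrite E2 Ek.
    have [Q' [HQc [HQf HQl]]] := IHn s' sg' Sz' Ss' Hp' Hlev' Hnear' Hfar.
    rewrite Eq' in HQc HQf HQl.
    exists Q'; split => //; split => //.
    rewrite ell_cons2; have := el_ge0 (or_intror (or_introl (conj Ss (conj Ss' (ex_intro _ k (conj E1 E2)))))).
    move=> Hel; have : 0 <= K0 ^+ 2 * el s s' by apply: mulr_ge0 => //; lra.
    rewrite mulrDr; lra.
  - exfalso; case: Ls'ok; rewrite E2 /= => Hk _.
    by move: Hs; rewrite E1 => [[Ek]]; move: Hk; rewrite Ek ltnn.
have Hs2 : (m.+2 <= s.2)%N by apply: nat1 Hm _; apply/eqP.
set q := anc m.+1 s.
pose bad v := v.2 = m.+1 \/ 5/2 * e m.+1 <= d q.1 v.1.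
have Gs : ~ bad s.
  case=> [/eqP|]; first by rewrite (negbTE Hs).
  rewrite dsym; lra.
have good_inv v : ~ bad v -> v.2 <> m.+1 /\ d q.1 v.1 < 5/2 * e m.+1.
  move=> Hv; split; first by move=> E; apply: Hv; left.
  by rewrite ltNge; apply/negP => H; apply: Hv; right.
case: (split_first bad sg) => [Hall|[s1 [b [s2 [Esg [Hs1 Hb]]]]]].
  exists [::]; split => //; split; last first.
    by rewrite /L_h /= mulr0; apply: mulr_ge0; [lra | apply: ell_ge0].
  have := allv_last (conj Gs Hall : allv (fun v => ~ bad v) (s :: sg)) => /good_inv [_ Hl].
  have := dtri w.1 q.1 (last s sg).1; simpl; lra.
subst sg.
have Ws : d w.1 s.1 < 5/2 * e m by apply: near_head Hnear.
move: Hp => /chainP_cat [Hp1 [Hgb Hp2]].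
set g := last s s1 in Hgb Hp2.
move: Hlev; rewrite -cat_cons => /allv_cat [Hlev1 Hlevb].
move: Hnear; rewrite belast_cat_cons => /allv_cat [_ /= [Wg Hnear2]].
move: Hfar; rewrite last_cat /= => Hfar.
have Gall : allv (fun v => ~ bad v) (s :: s1) by split.
have [Gg1 Gg2] := good_inv _ (allv_last Gall).
have [Lg1 Lg2] := allv_last Hlev1.
rewrite -/g in Gg1 Gg2 Lg1 Lg2.
have Lg : (m.+2 <= g.2)%N by apply: nat1.
have [Sg Sb] := adj_S Hgb.
have Sz2 : (size s2 <= n)%N by move: Hsz; rewrite size_cat /=; apply: nat2.
have Eell : ell (s :: s1 ++ b :: s2) = ell (s :: s1) + (el g b + ell (b :: s2)).
  by rewrite ell_cat -/g ell_cons2.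
have E1ge := ell_ge0 Hp1; have E2ge := ell_ge0 Hp2; have Ege := el_ge0 Hgb.
rewrite Eell.
case: (pselect (b.2 = m.+1)) => Hbl.
  have Hlt : (b.2 < g.2)%N by rewrite Hbl.
  have [Eg Eb] := adj_up Hgb Hlt.
  have Eab : anc m.+1 b = b by rewrite -Hbl anc_self.
  have [Q' [HQc [HQf HQl]]] := IHn b s2 Sz2 Sb Hp2 Hlevb Hnear2 Hfar.
  rewrite Eab in HQc HQf HQl.
  case: (pselect (b = q)) => Ebq.
    rewrite -Ebq; exists Q'; split => //; split => //.
    have : 0 <= K0 ^+ 2 * ell (s :: s1) by apply: mulr_ge0 => //; lra.
    have : 0 <= K0 ^+ 2 * el g b by apply: mulr_ge0 => //; lra.
    rewrite !mulrDr; lra.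
  have Hgbd : d g.1 b.1 < e m.+1.
    rewrite Eb /= Eg Hbl; apply: F1; rewrite -Hbl -Eg; exact: Sg.
  have Hqb : hz q b.
    have Hd' : d q.1 b.1 < lam * e q.2 by rewrite Lq; have := dtri q.1 g.1 b.1; lra.
    case: (close Sq Sb (etrans Lq (esym Hbl)) Hd') => // E.
    by exfalso; apply: Ebq.
  exists (b :: Q'); split; first by split.
  split; first by [].
  rewrite Lh_cons2.
  have Hpay1 : rs b * P <= pi b.
    apply: (rs_pi HPw P0 Sb Hbl (or_introl erefl)).
    have : d b.1 (par b.1 m.+1) < e m by apply: F1; rewrite -Hbl.
    have := dtri w.1 g.1 b.1; have := dtri w.1 b.1 (par b.1 m.+1); lra.
  have Hpay2 : pi b <= el g b.
    have Lg' : g.2 = m.+2 by rewrite Eg Hbl.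
    have Eb' : b = (par g.1 m.+2, m.+1) by rewrite {1}Eb Eg Hbl.
    by have := Pay_v Sg Lg'; rewrite -Eb'.
  have := mul_ge1 K2 Ege.
  have : 0 <= K0 ^+ 2 * ell (s :: s1) by apply: mulr_ge0 => //; lra.
  have := pmin_ler (rs q) (rs b) P0; rewrite (mulrC P (rs b)) !mulrDr; lra.
have Hbf : 5/2 * e m.+1 <= d q.1 b.1 by case: Hb.
have [[Lb1 _] _] := Hlevb.
have Lb : (m.+2 <= b.2)%N by apply: nat1.
have HPq : HP m.+1 q (rs q * P).
  move=> q'' Sq'' Lq'' Hd.
  have Hcl : q'' = q \/ hz q q''.
    have Hd' : d q.1 q''.1 < lam * e q.2 by rewrite Lq; lra.
    case: (close Sq Sq'' (etrans Lq (esym Lq'')) Hd') => [E|H]; [by left; exact: esym E | by right].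
  apply: (rs_pi HPw P0 Sq Lq Hcl).
  have : d q''.1 (par q''.1 m.+1) < e m by apply: F1; rewrite -Lq''.
  have := dtri w.1 s.1 q.1; have := dtri w.1 q.1 q''.1; have := dtri w.1 q''.1 (par q''.1 m.+1).
  lra.
have Hclaim := IH m.+1 q (rs q * P) s (s1 ++ [:: b]) Sq Lq (mulr_ge0 (rs_ge0 Sq) P0) HPq Ss.
have Hc1 : chainP adjr s (s1 ++ [:: b]) by apply/chainP_cat; split.
have Hc2 : allv (lev_ok m.+1 D) (s :: s1 ++ [:: b]).
  have H0 : allv (fun v => lev_ok m D.+1 v /\ v.2 <> m.+1) (s :: s1 ++ [:: b]).
    rewrite -cat_cons; apply/allv_cat; split.
      by apply: allv_and Hlev1 _; apply: allv_impl Gall => v /good_inv [].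
    by split => //; split; [exact: Hlevb.1 | exact: Hbl].
  apply: allv_impl H0 => v [[H1 H2] H3]; exact: nat3.
have Hc3 : d q.1 (anc m.+2 s).1 < e m.+1.
  rewrite /q (@anc_parS m.+1 s Hs2) /= dsym; apply: F1.
  by have := anc_in Ss Hs2; rewrite /inS.
have Hc4 : allv (fun v => d q.1 v.1 < 5/2 * e m.+1) (belast s (s1 ++ [:: b])).
  by rewrite cats1 belast_rcons; apply: allv_impl Gall => v /good_inv [].
have Hc5 : 5/2 * e m.+1 <= d q.1 (last s (s1 ++ [:: b])).1 by rewrite cats1 last_rcons.
have Hcl := Hclaim Hc1 Hc2 Hc3 Hc4 Hc5.
have Ecl : ell (s :: s1 ++ [:: b]) = ell (s :: s1) + el g b.
  by rewrite ell_cat -/g /ell_hat /= addr0.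
rewrite Ecl in Hcl.
have [Sq' Lq' Dq'] := anc_facts Sb Lb1.
have [Q' [HQc [HQf HQl]]] := IHn b s2 Sz2 Sb Hp2 Hlevb Hnear2 Hfar.
have Hqq' : hz q (anc m.+1 b).
  have Hst := step_deep Hgb Lg Lb.
  have Hd' : d q.1 (anc m.+1 b).1 < lam * e q.2.
    rewrite Lq; have := dtri q.1 g.1 b.1; have := dtri q.1 b.1 (anc m.+1 b).1; lra.
  case: (close Sq Sq' (etrans Lq (esym Lq')) Hd') => // E.
  exfalso; move: Hbf; rewrite /q E (dsym _ b.1); lra.
exists (anc m.+1 b :: Q'); split; first by split.
split; first by [].
rewrite Lh_cons2; have := pmin_le (rs q) (rs (anc m.+1 b)) P0.
rewrite (mulrC P (rs q)) !mulrDr; rewrite !mulrDr in Hcl; lra.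
Qed.

Lemma claim_all D : claim D.
Proof.
elim: D => [|D IH] m w P s sg Sw Lw P0 HPw Ss Hp Hlev Hst Hnear Hfar.
  by exfalso; case: Hlev => [[H1 H2] _]; apply: (nat0 H1 H2).
have [Q [HQc [HQf HQl]]] := scan IH Sw Lw P0 HPw (leqnn (size sg)) Ss Hp Hlev Hnear Hfar.
have [[Hm _] _] := Hlev.
have [Sq Lq _] := anc_facts Ss Hm.
have H1 : 1 <= Lh (anc m.+1 s :: Q).
  apply: (h3 Sw Lw); exists (anc m.+1 s), Q; split => //; split => //; split => //; split => //.
  split; first by rewrite /inB Lw.
  by apply/negP; rewrite -leNgt.
have := mul_ge1 H1 P0; rewrite mulrC; lra.
Qed.

Lemma max_level (l : seq (X * nat)) : exists N, allv (fun v => (v.2 <= N)%N) l.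
Proof.
elim: l => [|v l [N HN]]; first by exists 0%N.
exists (maxn v.2 N); split; first by rewrite leq_maxl.
by apply: allv_impl HN => w Hw; rewrite leq_max Hw orbT.
Qed.

Lemma a_pow_ge n : (n%:R : R) <= a ^+ n.
Proof.
elim: n => [|n IH]; first by rewrite expr0 ler01.
have H1 : 1 <= a ^+ n by apply: exprn_ege1; have := a6; lra.
rewrite exprS -natr1; have := a6; nra.
Qed.

Lemma eS3 n : e n = e n.+3 * (a * a * a).
Proof. by rewrite !mulrA !eS. Qed.

Lemma cset_far x y z n : cset d a Xs x y (z, n) -> e n.+1 < d x y.
Proof.
case=> _ [_ [_ Hmax]] /=.
have [z' [Hz' Hd]] := F3 n.+1 x.
have Hy : 2 * e n.+1 <= d z' y.
  rewrite leNgt; apply/negP => Hy.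
  have Hx' : d z' x < 2 * e n.+1 by have := e_pos n.+1; lra.
  by have := Hmax (z', n.+1) Hz' Hx' Hy; rewrite /= ltnn.
have := dtri z' x y; lra.
Qed.

Lemma main_bound x y : x <> y -> exists k0, forall k, (k0 <= k)%N ->
  forall u v, S u -> S v -> u.2 = k -> v.2 = k -> inB d a x u -> inB d a y v ->
  forall t, chainP adjr u t -> last u t = v ->
  forall c, cset d a Xs x y c -> eta_m ^+ 2 * pi c <= K0 ^+ 3 * ell (u :: t).
Proof.
move=> Hxy.
have Hd0 : 0 < d x y.
  rewrite lt0r dge0 andbT; apply/eqP => H; apply: Hxy; case: dm => _ [/(_ x y) [+ _] _]; exact.
have ha3 : 0 < a * a * a by have := a_pos; move=> ha; rewrite !mulr_gt0.
set M := 4 * (a * a * a) / d x y.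
have HM0 : 0 <= M by rewrite /M divr_ge0 ?ltW // mulr_gt0.
exists (Num.Def.archi_bound M) => k Hk u v Su Sv Lu Lv Hxu Hyv t Hp Hlast [z n] Hc.
have hK0 := K0_ge1; have heta := eta_pos.
have Hek : e k * (4 * (a * a * a)) < d x y.
  have H1 := archi_boundP HM0.
  move: Hk; set N := Num.Def.archi_bound M => Hk.
  have H2 := a_pow_ge N.
  have H3 : e k <= e N by apply: e_mono.
  have H4 : M < a ^+ N by lra.
  have H5 : 0 < e N := e_pos _.
  have H6 : e N * a ^+ N = 1.
    by rewrite mulVf // gt_eqF // exprn_gt0 // a_pos.
  move: H4; rewrite /M ltr_pdivrMr // => H4.
  have H7 : e N * (4 * (a * a * a)) < d x y.
    have : e N * (4 * (a * a * a)) < e N * (a ^+ N * d x y) by rewrite ltr_pM2l.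
    by rewrite [e N * (a ^+ N * _)]mulrA H6 mul1r.
  have : e k * (4 * (a * a * a)) <= e N * (4 * (a * a * a)).
    by rewrite ler_wpM2r // ltW // mulr_gt0.
  lra.
have [Sc [Hzx [Hzy Hmax]]] := Hc; rewrite /= in Sc Hzx Hzy Hmax.
have Hxyn : d x y < 4 * e n.
  have := dtri x z y; rewrite (dsym x z); lra.
have Hkn : (n.+3 < k)%N.
  apply: e_lt; have := eS3 n; have := e_pos k; move=> *; nra.
have Hfar0 := cset_far Hc.
have Hmk : (n.+3 <= u.2)%N by rewrite Lu; apply: ltnW.
have Hmk' : (n.+2 <= u.2)%N by apply: ltnW.
set w := anc n.+2 u.
have Sw : S w by apply: anc_in.
have Lw : w.2 = n.+2 by [].
have Duw : d u.1 w.1 <= 6/5 * e n.+2 by apply: anc_dist.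
have Hst : d w.1 (anc n.+3 u).1 < e n.+2.
  rewrite /w (anc_parS Hmk) /= dsym; apply: F1.
  by have := anc_in Su Hmk; rewrite /inS.
have hem := e_pos n.+2; have he6 := e6 n.+2; have he6n := e6 n; have he6n1 := e6 n.+1.
have hekm : e k <= e n.+4 by apply: e_mono; rewrite Lu in Hmk; exact: Hkn.
have he6m1 := e6 n.+3; have hem1 := e_pos n.+3; have hem2 := e_pos n.+4.
rewrite /inB Lu in Hxu; rewrite /inB Lv in Hyv.
have Dwv : 5/2 * e n.+2 <= d w.1 v.1.
  have := dtri x u.1 y; have := dtri u.1 w.1 y; have := dtri w.1 v.1 y.
  rewrite (dsym x u.1) (dsym u.1 w.1) (dsym v.1 y) in Hxu Duw Hyv *.
  lra.
pose P := eta_m ^+ 2 * pi (z, n) / K0.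
have P0 : 0 <= P.
  by rewrite /P divr_ge0 ?mulr_ge0 ?sqr_ge0 // ?ltW ?pi_pos //; lra.
have HPw : HP n.+2 w P.
  move=> w'' Sw'' Lw'' Hd.
  case: w'' Sw'' Lw'' Hd => x'' l /= Sw'' Lw'' Hd; subst l.
  set p1 := (par x'' n.+2, n.+1).
  have Sp1 : S p1 by apply: F1in.
  set p2 := (par p1.1 n.+1, n).
  have Sp2 : S p2 by apply: F1in.
  have E1 : pi (x'', n.+2) = rho (x'', n.+2) * pi p1 by [].
  have E2 : pi p1 = rho p1 * pi p2 by [].
  have R1 := rho_ge Sw''; have R2 := rho_ge Sp1.
  have Q1 := pi_pos Sp2.
  have Hcl : pi (z, n) <= K0 * pi p2.
    have D1 : d x'' p1.1 < e n.+1 by apply: F1.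
    have D2 : d p1.1 p2.1 < e n by apply: F1.
    have Hdz : d (z, n).1 p2.1 < lam * e (z, n).2.
      rewrite /=; have H6 : 6 * e n <= lam * e n by rewrite ler_wpM2r // ltW ?e_pos.
      have := dtri z x p2.1; have := dtri x u.1 p2.1; have := dtri u.1 w.1 p2.1;
      have := dtri w.1 x'' p2.1; have := dtri x'' p1.1 p2.1.
      have := dsym x u.1; lra.
    case: (close Sc Sp2 erefl Hdz) => [<-|Hh]; last by case: h2 => _; apply.
    have := pi_pos Sc; nra.
  rewrite /P ler_pdivrMr; last by lra.
  rewrite E1 E2.
  have Hrr : eta_m ^+ 2 <= rho (x'', n.+2) * rho p1.
    rewrite expr2; apply: ler_pM => //; lra.
  have H8 : eta_m ^+ 2 * pi p2 <= rho (x'', n.+2) * rho p1 * pi p2.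
    by apply: ler_wpM2r => //; exact: ltW.
  have H9 : eta_m ^+ 2 * pi p2 * K0 <= rho (x'', n.+2) * rho p1 * pi p2 * K0.
    by apply: ler_wpM2r => //; lra.
  have H10 : eta_m ^+ 2 * pi (z, n) <= eta_m ^+ 2 * (K0 * pi p2).
    by apply: ler_wpM2l => //; rewrite sqr_ge0.
  have E3 : eta_m ^+ 2 * (K0 * pi p2) = eta_m ^+ 2 * pi p2 * K0 by ring.
  have E4 : rho (x'', n.+2) * (rho p1 * pi p2) * K0 = rho (x'', n.+2) * rho p1 * pi p2 * K0 by ring.
  rewrite E4; rewrite E3 in H10; exact: le_trans H10 H9.
have HPK : P <= K0 ^+ 2 * ell (u :: t) -> eta_m ^+ 2 * pi (z, n) <= K0 ^+ 3 * ell (u :: t).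
  rewrite /P ler_pdivrMr; last by lra.
  have E : K0 ^+ 3 * ell (u :: t) = K0 ^+ 2 * ell (u :: t) * K0 by ring.
  by rewrite E.
apply: HPK.
pose bad (v' : X * nat) := (v'.2 <= n.+2)%N \/ 5/2 * e n.+2 <= d w.1 v'.1.
have Gu : ~ bad u.
  case=> [|]; first by rewrite leqNgt Hmk.
  move=> H; have := dsym u.1 w.1; lra.
have good_inv v' : ~ bad v' -> (n.+2 < v'.2)%N /\ d w.1 v'.1 < 5/2 * e n.+2.
  move=> Hv; split; first by rewrite ltnNge; apply/negP => H; apply: Hv; left.
  by rewrite ltNge; apply/negP => H; apply: Hv; right.
case: (split_first bad t) => [Hall|[t1 [b [t2 [Et [Ht1 Hb]]]]]].
  exfalso; have := allv_last (conj Gu Hall : allv (fun v => ~ bad v) (u :: t)).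
  rewrite Hlast => /good_inv [_]; lra.
subst t.
move: Hp => /chainP_cat [Hp1 [Hgb Hp2]].
set g := last u t1 in Hgb Hp2.
have Gall : allv (fun v => ~ bad v) (u :: t1) by split.
have [Lg Dwg] := good_inv _ (allv_last Gall).
rewrite -/g in Lg Dwg.
have [Sg Sb] := adj_S Hgb.
have Eell : ell (u :: t1 ++ b :: t2) = ell (u :: t1) + (el g b + ell (b :: t2)).
  by rewrite ell_cat -/g ell_cons2.
have E1ge := ell_ge0 Hp1; have E2ge := ell_ge0 Hp2; have Ege := el_ge0 Hgb.
have K2 := K0sq_ge1.
rewrite Eell.
case: (pselect (b.2 <= n.+2)%N) => Hbl.
  have Hlt : (b.2 < g.2)%N by apply: leq_ltn_trans Hbl Lg.
  have [Eg Eb] := adj_up Hgb Hlt.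
  have Lb : b.2 = n.+2 by apply/eqP; rewrite eqn_leq Hbl -ltnS -Eg.
  have Lg' : g.2 = n.+3 by rewrite Eg Lb.
  have Eb' : b = (par g.1 n.+3, n.+2) by rewrite {1}Eb Lg' Lb.
  have Hpv : pi b <= el g b by have := Pay_v Sg Lg'; rewrite -Eb'.
  have HPb : P <= pi b.
    apply: HPw => //.
    have : d g.1 b.1 < e n.+2 by rewrite Eb' /=; apply: F1; rewrite -Lg'.
    have := dtri w.1 g.1 b.1; lra.
  have := mul_ge1 K2 Ege.
  have : 0 <= K0 ^+ 2 * ell (u :: t1) by apply: mulr_ge0 => //; lra.
  have : 0 <= K0 ^+ 2 * ell (b :: t2) by apply: mulr_ge0 => //; lra.
  rewrite !mulrDr; lra.
have Hbf : 5/2 * e n.+2 <= d w.1 b.1 by case: Hb => // H; exfalso; apply: Hbl.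
have Hbm : (n.+2 < b.2)%N by rewrite ltnNge; apply/negP.
have [N HN] := max_level (u :: t1 ++ [:: b]).
have Hc1 : chainP adjr u (t1 ++ [:: b]) by apply/chainP_cat; split.
have Hc2 : allv (lev_ok n.+2 N) (u :: t1 ++ [:: b]).
  have H0 : allv (fun v => (n.+2 < v.2)%N) (u :: t1 ++ [:: b]).
    rewrite -cat_cons; apply/allv_cat; split; last by split.
    by apply: allv_impl Gall => vv /good_inv [].
  apply: allv_impl (allv_and H0 HN) => vv [H1 H2]; split => //.
  by apply: leq_trans H2 _; rewrite leq_addl.
have Hc4 : allv (fun v => d w.1 v.1 < 5/2 * e n.+2) (belast u (t1 ++ [:: b])).
  by rewrite cats1 belast_rcons; apply: allv_impl Gall => vv /good_inv [].
have Hc5 : 5/2 * e n.+2 <= d w.1 (last u (t1 ++ [:: b])).1 by rewrite cats1 last_rcons.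
have := claim_all Sw Lw P0 HPw Su Hc1 Hc2 Hst Hc4 Hc5.
have Ecl : ell (u :: t1 ++ [:: b]) = ell (u :: t1) + el g b.
  by rewrite ell_cat -/g /ell_hat /= addr0.
rewrite Ecl.
have : 0 <= K0 ^+ 2 * ell (b :: t2) by apply: mulr_ge0 => //; lra.
rewrite !mulrDr; lra.
Qed.

Local Open Scope classical_set_scope.
Lemma final : exists K2 : R, 1 <= K2 /\
    forall x y : X, x <> y -> exists k0 : nat, forall k : nat, (k0 <= k)%N ->
      forall u v : X * nat, inS Xs u -> inS Xs v -> u.2 = k -> v.2 = k ->
        inB d a x u -> inB d a y v ->
        forall t : seq (X * nat), chainP (adj d a lam Xs par) u t -> last u t = v ->
          K2^-1 * pi_c d a Xs par rho x y <= ell_hat d a lam Xs par rho K0 eta_m (u :: t).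
Proof.
have heta := eta_pos; have hK := K0_ge1.
have heta1 : eta_m <= 1 by case: h1 => _ [? [? _]]; lra.
have He2 : 0 < eta_m ^+ 2 by rewrite exprn_gt0.
have He21 : eta_m ^+ 2 <= 1 by rewrite expr2; nra.
have HK3 : 1 <= K0 ^+ 3 by apply: exprn_ege1.
have K2pos : 0 < K0 ^+ 3 / eta_m ^+ 2 by rewrite divr_gt0 //; lra.
exists (K0 ^+ 3 / eta_m ^+ 2); split.
  by rewrite ler_pdivlMr // mul1r; lra.
move=> x y Hxy; have [k0 Hk0] := main_bound Hxy; exists k0.
move=> k Hk u v Su Sv Lu Lv Hxu Hyv t Hp Hl.
have Hell := ell_ge0 Hp.
suff H : pi_c d a Xs par rho x y <= K0 ^+ 3 / eta_m ^+ 2 * ell (u :: t).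
  rewrite -(ler_pM2l K2pos) mulrA mulfV ?mul1r //; lra.
rewrite /pi_c.
case: (pselect (exists c, cset d a Xs x y c)) => [[c Hc]|Hn].
  apply: ge_sup; first by exists (pi c), c.
  move=> r [c' Hc' <-]; have := Hk0 k Hk u v Su Sv Lu Lv Hxu Hyv t Hp Hl c' Hc'.
  move=> H.
  have E : K0 ^+ 3 / eta_m ^+ 2 * ell (u :: t) = (K0 ^+ 3 * ell (u :: t)) / eta_m ^+ 2.
    by rewrite mulrAC.
  by rewrite E ler_pdivlMr // mulrC.
have -> : [set pi c | c in cset d a Xs x y] = set0.
  by apply/seteqP; split => // r [c Hc _]; exfalso; apply: Hn; exists c.
by rewrite sup0; apply: mulr_ge0 => //; lra.
Qed.
End Proof.

Unset Implicit Arguments.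
Set Strict Implicit.

Theorem lemma3p20 (R : realType) (X : Type) (d : X -> X -> R) (a lam : R)
  (Xs : nat -> X -> Prop) (x0 : X) (par : X -> nat -> X)
  (rho : X * nat -> R) (eta_m eta_p K0 : R) :
  is_metric d -> seq_compact d -> doubling d -> diam d = 2^-1 ->
  6 <= lam -> lam <= a -> hyp_filling d a Xs x0 par ->
  (forall v, inS Xs v -> 0 < rho v) ->
  H1 Xs rho eta_m eta_p -> H2 d a lam Xs par rho K0 -> H3' d a lam Xs rho ->
  exists K2 : R, 1 <= K2 /\
    forall x y : X, x <> y -> exists k0 : nat, forall k : nat, (k0 <= k)%N ->
      forall u v : X * nat, inS Xs u -> inS Xs v -> u.2 = k -> v.2 = k ->
        inB d a x u -> inB d a y v ->
        forall t : seq (X * nat), chainP (adj d a lam Xs par) u t -> last u t = v ->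
          K2^-1 * pi_c d a Xs par rho x y <= ell_hat d a lam Xs par rho K0 eta_m (u :: t).
Proof.
move=> dm _ _ _ lam6 lama hf rhop h1 h2 h3.
exact: (@final R X d a lam Xs x0 par rho eta_m eta_p K0 dm lam6 lama hf rhop h1 h2 h3).
Qed.
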